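(* Let $\{\mathcal G,(\Gamma_0,\Gamma_1),(\widetilde\Gamma_0,\widetilde\Gamma_1)\}$ be a triple for the adjoint pair $\{S,\widetilde S\}$ satisfying (G), (D), (M), with $\rho(A_0)\neq\emptyset$, $\gamma$-fields $\gamma,\widetilde\gamma$ and Weyl functions $M,\widetilde M$. Let $B,\widetilde B$ be linear operators in $\mathcal G$, $\lambda\in\rho(A_0)$, $\mu\in\rho(\widetilde A_0)$. (i) If $\lambda\notin\sigma_p(A_B)$ and $f\in\mathfrak H$ satisfies $\widetilde\gamma(\overline\lambda)^*f\in\operatorname{dom}B$ and $B\widetilde\gamma(\overline\lambda)^*f\in\operatorname{ran}(I-BM(\lambda))$, then $f\in\operatorname{ran}(A_B-\lambda)$ and $(A_B-\lambda)^{-1}f=(A_0-\lambda)^{-1}f+\gamma(\lambda)(I-BM(\lambda))^{-1}B\widetilde\gamma(\overline\lambda)^*f$. (ii) If $\mu\notin\sigma_p(\widetilde A_{\widetilde B})$ and $g\in\mathfrak H$ satisfies $\gamma(\overline\mu)^*g\in\operatorname{dom}\widetilde B$ and $\widetilde B\gamma(\overline\mu)^*g\in\operatorname{ran}(I-\widetilde B\widetilde M(\mu))$, then $g\in\operatorname{ran}(\widetilde A_{\widetilde B}-\mu)$ and $(\widetilde A_{\widetilde B}-\mu)^{-1}g=(\widetilde A_0-\mu)^{-1}g+\widetilde\gamma(\mu)(I-\widetilde B\widetilde M(\mu))^{-1}\widetilde B\gamma(\overline\mu)^*g$.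
   Context: Let $\mathfrak H$ be a separable Hilbert space. An adjoint pair $\{S,\widetilde S\}$ consists of densely defined closed operators $S,\widetilde S$ in $\mathfrak H$ with $(Sf,g)=(f,\widetilde Sg)$ for all $f\in\operatorname{dom}S$, $g\in\operatorname{dom}\widetilde S$. Fix operators $T\subset S^*$ and $\widetilde T\subset\widetilde S^*$ which are cores, i.e. $\overline T=S^*$ and $\overline{\widetilde T}=\widetilde S^*$. A triple $\{\mathcal G,(\Gamma_0,\Gamma_1),(\widetilde\Gamma_0,\widetilde\Gamma_1)\}$ for $\{S,\widetilde S\}$ consists of a Hilbert space $\mathcal G$ and linear maps $\Gamma_0,\Gamma_1:\operatorname{dom}T\to\mathcal G$, $\widetilde\Gamma_0,\widetilde\Gamma_1:\operatorname{dom}\widetilde T\to\mathcal G$. Put $A_0:=T\upharpoonright\ker\Gamma_0$ and $\widetilde A_0:=\widetilde T\upharpoonright\ker\widetilde\Gamma_0$. Conditions: (G) $(Tf,g)_{\mathfrak H}-(f,\widetilde Tg)_{\mathfrak H}=(\Gamma_1f,\widetilde\Gamma_0g)_{\mathcal G}-(\Gamma_0f,\widetilde\Gamma_1g)_{\mathcal G}$ for all $f\in\operatorname{dom}T$, $g\in\operatorname{dom}\widetilde T$; (D) $\operatorname{ran}\Gamma_0$ and $\operatorname{ran}\widetilde\Gamma_0$ are dense in $\mathcal G$; (M) $A_0^*=\widetilde A_0$ and $\widetilde A_0^*=A_0$. For $\lambda\in\rho(A_0)$ one has $\operatorname{dom}T=\ker\Gamma_0\dotplus\ker(T-\lambda)$,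 so $\Gamma_0\upharpoonright\ker(T-\lambda)$ is injective; similarly for $\widetilde T$. The $\gamma$-fields are $\gamma(\lambda):=(\Gamma_0\upharpoonright\ker(T-\lambda))^{-1}$, $\widetilde\gamma(\mu):=(\widetilde\Gamma_0\upharpoonright\ker(\widetilde T-\mu))^{-1}$; the Weyl functions are $M(\lambda):=\Gamma_1\gamma(\lambda)$, $\lambda\in\rho(A_0)$, and $\widetilde M(\mu):=\widetilde\Gamma_1\widetilde\gamma(\mu)$, $\mu\in\rho(\widetilde A_0)$. Products of operators have their natural domains, and $(I-BM(\lambda))^{-1}$ denotes the inverse of the injective operator $I-BM(\lambda)$ on its range. Define $A_Bf:=Tf$ on $\operatorname{dom}A_B:=\{f\in\operatorname{dom}T:\Gamma_1f\in\operatorname{dom}B,\ B\Gamma_1f=\Gamma_0f\}$ and $\widetilde A_{\widetilde B}g:=\widetilde Tg$ on $\operatorname{dom}\widetilde A_{\widetilde B}:=\{g\in\operatorname{dom}\widetilde T:\widetilde\Gamma_1g\in\operatorname{dom}\widetilde B,\ \widetilde B\widetilde\Gamma_1g=\widetilde\Gamma_0g\}$. $\sigma_p$ denotes the set of eigenvalues. *)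

(* Defs.v *)
From HB Require Import structures.
From mathcomp Require Import all_boot all_order all_algebra.
From mathcomp Require Import boolp classical_sets reals.
From mathcomp.real_closed Require Import complex.
Set Implicit Arguments. Unset Strict Implicit. Unset Printing Implicit Defensive.
Import Order.TTheory GRing.Theory Num.Theory.
Local Open Scope ring_scope.
Local Open Scope classical_set_scope.

Section HilbertDefs.
Variable R : realType.
Local Notation C := (R[i]).

(* Complex Hilbert spaces, inner product linear in the first argument  *)
(* and conjugate linear in the second.                                 *)

Definition ip_norm (V : lmodType C) (ip : V -> V -> C) (x : V) : R :=
  Num.sqrt (complex.Re (ip x x)).

Definition ip_cvg (V : lmodType C) (ip : V -> V -> C) (u : nat -> V) (l : V) :=
  forall e : R, 0 < e -> exists N : nat, forall n, (N <= n)%N ->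
    ip_norm ip (u n - l) < e.

Definition ip_cauchy (V : lmodType C) (ip : V -> V -> C) (u : nat -> V) :=
  forall e : R, 0 < e -> exists N : nat, forall m n, (N <= m)%N -> (N <= n)%N ->
    ip_norm ip (u m - u n) < e.

Record hilbert := Hilbert {
  hcar :> lmodType C;
  hip : hcar -> hcar -> C;
  hip_linl : forall (a : C) (x y z : hcar), hip (a *: x + y) z = a * hip x z + hip y z;
  hip_conj : forall x y : hcar, hip y x = conjc (hip x y);
  hip_ge0 : forall x : hcar, 0 <= hip x x;
  hip_def : forall x : hcar, hip x x = 0 -> x = 0;
  hcomplete : forall u : nat -> hcar, ip_cauchy hip u -> exists l, ip_cvg hip u l
}.

Definition hnorm (H : hilbert) (x : H) : R := ip_norm (@hip H) x.
Definition hcvg (H : hilbert) (u : nat -> H) (l : H) := ip_cvg (@hip H) u l.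

Definition hdense (H : hilbert) (D : set H) :=
  forall (x : H) (e : R), 0 < e -> exists y, D y /\ hnorm (x - y) < e.

Definition separable (H : hilbert) :=
  exists d : nat -> H, hdense (range d).

Record op (V W : hilbert) := Op { dom : set V; app : V -> W }.

Definition linear_op (V W : hilbert) (A : op V W) :=
  dom A 0 /\
  (forall (a : C) x y, dom A x -> dom A y ->
     dom A (a *: x + y) /\ app A (a *: x + y) = a *: app A x + app A y).

Definition linear_on (V W : hilbert) (D : set V) (f : V -> W) :=
  forall (a : C) x y, D x -> D y -> f (a *: x + y) = a *: f x + f y.

Definition densely_defined (V W : hilbert) (A : op V W) := hdense (dom A).

Definition closed_op (V W : hilbert) (A : op V W) :=
  forall (u : nat -> V) x y, (forall n, dom A (u n)) ->
    hcvg u x -> hcvg (fun n => app A (u n)) y -> dom A x /\ app A x = y.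

Definition op_le (V W : hilbert) (A B : op V W) :=
  forall x, dom A x -> dom B x /\ app B x = app A x.

Definition op_eq (V W : hilbert) (A B : op V W) :=
  (forall x, dom A x <-> dom B x) /\ (forall x, dom A x -> app A x = app B x).

Definition is_closure (V W : hilbert) (T A : op V W) :=
  closed_op A /\ op_le T A /\
  forall x, dom A x -> exists u : nat -> V, (forall n, dom T (u n)) /\
     hcvg u x /\ hcvg (fun n => app T (u n)) (app A x).

(* the adjoint operator (meaningful for densely defined A) *)
Definition adj_rel (V W : hilbert) (A : op V W) (g : W) (h : V) :=
  forall f, dom A f -> hip (app A f) g = hip f h.

Definition op_adj (V W : hilbert) (A : op V W) : op W V :=
  Op [set g | exists h, adj_rel A g h] (fun g => xget 0 (adj_rel A g)).

Definition op_id (V : hilbert) : op V V := Op setT id.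

Definition op_comp (U V W : hilbert) (A : op V W) (B : op U V) : op U W :=
  Op [set x | dom B x /\ dom A (app B x)] (fun x => app A (app B x)).

Definition op_minus (V W : hilbert) (A B : op V W) : op V W :=
  Op (dom A `&` dom B) (fun x => app A x - app B x).

Definition op_shift (V : hilbert) (A : op V V) (l : C) : op V V :=
  Op (dom A) (fun x => app A x - l *: x).

Definition op_restrict (V W : hilbert) (A : op V W) (P : set V) : op V W :=
  Op (dom A `&` P) (app A).

Definition op_inv (V W : hilbert) (A : op V W) : op W V :=
  Op [set y | exists x, dom A x /\ app A x = y]
     (fun y => xget 0 [set x | dom A x /\ app A x = y]).

Definition resolvent (V : hilbert) (A : op V V) (l : C) :=
  (forall y : V, exists x, dom A x /\ app A x - l *: x = y) /\
  (forall x, dom A x -> app A x - l *: x = 0 -> x = 0) /\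
  (exists c : R, forall x, dom A x -> hnorm x <= c * hnorm (app A x - l *: x)).

Definition is_eigenvalue (V : hilbert) (A : op V V) (l : C) :=
  exists f, dom A f /\ f <> 0 /\ app A f = l *: f.

Definition adjoint_pair (H : hilbert) (S St : op H H) :=
  linear_op S /\ linear_op St /\ densely_defined S /\ densely_defined St /\
  closed_op S /\ closed_op St /\
  forall f g, dom S f -> dom St g -> hip (app S f) g = hip f (app St g).

Definition A0 (H G : hilbert) (T : op H H) (Gam0 : H -> G) : op H H :=
  op_restrict T [set f | Gam0 f = 0].

Definition gammaf (H G : hilbert) (T : op H H) (Gam0 : H -> G) (l : C) : op G H :=
  op_inv (Op (dom T `&` [set f | app T f = l *: f]) Gam0).

Definition weylM (H G : hilbert) (T : op H H) (Gam0 Gam1 : H -> G) (l : C) : op G G :=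
  op_comp (Op (dom T) Gam1) (gammaf T Gam0 l).

Definition AB (H G : hilbert) (T : op H H) (Gam0 Gam1 : H -> G) (B : op G G) : op H H :=
  Op [set f | dom T f /\ dom B (Gam1 f) /\ app B (Gam1 f) = Gam0 f] (app T).

(* The triple {G, (Gam0, Gam1), (Gamt0, Gamt1)} for {S, St} with the cores
   T, Tt of S^*, St^*, satisfying (G), (D), (M). *)
Definition triple_GDM (H G : hilbert) (S St T Tt : op H H)
    (Gam0 Gam1 Gamt0 Gamt1 : H -> G) :=
  adjoint_pair S St /\
  linear_op T /\ linear_op Tt /\
  is_closure T (op_adj S) /\ is_closure Tt (op_adj St) /\
  linear_on (dom T) Gam0 /\ linear_on (dom T) Gam1 /\
  linear_on (dom Tt) Gamt0 /\ linear_on (dom Tt) Gamt1 /\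
  (forall f g, dom T f -> dom Tt g ->
     hip (app T f) g - hip f (app Tt g) = hip (Gam1 f) (Gamt0 g) - hip (Gam0 f) (Gamt1 g)) /\
  hdense [set Gam0 f | f in dom T] /\ hdense [set Gamt0 g | g in dom Tt] /\
  op_eq (op_adj (A0 T Gam0)) (A0 Tt Gamt0) /\ op_eq (op_adj (A0 Tt Gamt0)) (A0 T Gam0).

End HilbertDefs.

(* Main.v *)
Require Import Defs.
From HB Require Import structures.
From mathcomp Require Import all_boot all_order all_algebra.
From mathcomp Require Import boolp classical_sets reals.
From mathcomp.real_closed Require Import complex.
From mathcomp Require Import ring lra.
Import Order.TTheory GRing.Theory Num.Theory.
Local Open Scope ring_scope.
Local Open Scope classical_set_scope.

Section Helpers.
Local Open Scope complex_scope.
Set Implicit Arguments. Unset Strict Implicit.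


Lemma conjcD (R : realType) (a b : R[i]) : conjc (a + b) = conjc a + conjc b.
Proof. by case: a; case: b => *; rewrite /= opprD. Qed.
Lemma conjcM (R : realType) (a b : R[i]) : conjc (a * b) = conjc a * conjc b.
Proof. by case: a; case: b => *; simpc; apply/eqP; rewrite eq_complex /=; apply/andP; split; apply/eqP; ring. Qed.
Lemma conjcN (R : realType) (a : R[i]) : conjc (- a) = - conjc a.
Proof. by case: a => *. Qed.
Lemma conjc0' (R : realType) : conjc (0 : R[i]) = 0.
Proof. by apply/eqP; rewrite eq_complex /= oppr0 !eqxx. Qed.

Lemma hip0l (R : realType) (V : hilbert R) (z : V) : hip 0 z = 0.
Proof.
have h := hip_linl 1 0 0 z; rewrite scale1r addr0 mul1r in h.
by apply/esym/(@addrI _ (hip 0 z)); rewrite addr0 {1}h.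
Qed.

Lemma hipDl (R : realType) (V : hilbert R) (x y z : V) :
  hip (x + y) z = hip x z + hip y z.
Proof. by have := hip_linl 1 x y z; rewrite scale1r mul1r. Qed.

Lemma hipZl (R : realType) (V : hilbert R) a (x z : V) :
  hip (a *: x) z = a * hip x z.
Proof. by have := hip_linl a x 0 z; rewrite !addr0 hip0l addr0. Qed.

Lemma hipNl (R : realType) (V : hilbert R) (x z : V) : hip (- x) z = - hip x z.
Proof. by rewrite -scaleN1r hipZl mulN1r. Qed.

Lemma hipBl (R : realType) (V : hilbert R) (x y z : V) :
  hip (x - y) z = hip x z - hip y z.
Proof. by rewrite hipDl hipNl. Qed.

Lemma hipDr (R : realType) (V : hilbert R) (x y z : V) :
  hip z (x + y) = hip z x + hip z y.
Proof. by rewrite hip_conj hipDl conjcD -!hip_conj. Qed.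

Lemma hipZr (R : realType) (V : hilbert R) a (x z : V) :
  hip z (a *: x) = conjc a * hip z x.
Proof. by rewrite hip_conj hipZl conjcM -hip_conj. Qed.

Lemma hip0r (R : realType) (V : hilbert R) (z : V) : hip z 0 = 0.
Proof. by rewrite hip_conj hip0l conjc0'. Qed.

Lemma hipNr (R : realType) (V : hilbert R) (x z : V) : hip z (- x) = - hip z x.
Proof. by rewrite -scaleN1r hipZr conjcN conjc1 mulN1r. Qed.

Lemma hipBr (R : realType) (V : hilbert R) (x y z : V) :
  hip z (x - y) = hip z x - hip z y.
Proof. by rewrite hipDr hipNr. Qed.

Definition hq (R : realType) (V : hilbert R) (x : V) : R := complex.Re (hip x x).

Lemma hipxx (R : realType) (V : hilbert R) (x : V) : hip x x = (hq x)%:C.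
Proof.
have := hip_ge0 x; rewrite /hq lecE; case: (hip x x) => a b /= /andP[/eqP -> _].
by [].
Qed.

Lemma hq_ge0 (R : realType) (V : hilbert R) (x : V) : 0 <= hq x.
Proof. by have := hip_ge0 x; rewrite hipxx lecR. Qed.

Lemma hq_eq0 (R : realType) (V : hilbert R) (x : V) : hq x = 0 -> x = 0.
Proof. by move=> h; apply: hip_def; rewrite hipxx h. Qed.

Lemma Re_hipC (R : realType) (V : hilbert R) (x y : V) : complex.Re (hip x y) = complex.Re (hip y x).
Proof. by rewrite (hip_conj x y); case: (hip x y) => a b. Qed.

Lemma hnorm_sqr (R : realType) (V : hilbert R) (x : V) : hnorm x ^+ 2 = hq x.
Proof. by rewrite /hnorm /ip_norm sqr_sqrtr // hq_ge0. Qed.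

Lemma hnorm_ge0 (R : realType) (V : hilbert R) (x : V) : 0 <= hnorm x.
Proof. exact: sqrtr_ge0. Qed.

Lemma hqD (R : realType) (V : hilbert R) (x y : V) :
  hq (x + y) = hq x + 2 * complex.Re (hip x y) + hq y.
Proof.
rewrite /hq hipDl !hipDr !raddfD /= (Re_hipC y x); lra.
Qed.

Lemma hqZr (R : realType) (V : hilbert R) (t : R) (x : V) :
  hq (t%:C *: x) = t ^+ 2 * hq x.
Proof.
rewrite /hq hipZl hipZr conjc_real hipxx; simpc; by rewrite /= expr2 mulrA.
Qed.

Lemma Re_realM (R : realType) (t : R) (z : R[i]) : complex.Re (t%:C * z) = t * complex.Re z.
Proof. by case: z => a b /=; rewrite mul0r subr0. Qed.

Lemma Re_hipZr (R : realType) (V : hilbert R) (t : R) (x y : V) :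
  complex.Re (hip x (t%:C *: y)) = t * complex.Re (hip x y).
Proof. by rewrite hipZr conjc_real Re_realM. Qed.

Lemma Re_CS (R : realType) (V : hilbert R) (x y : V) :
  complex.Re (hip x y) ^+ 2 <= hq x * hq y.
Proof.
have [y0|ny0] := eqVneq (hq y) 0.
  by rewrite (hq_eq0 y0) hip0r /= expr2 mul0r mulr_ge0 ?hq_ge0.
have qy : 0 < hq y by rewrite lt_neqAle eq_sym ny0 hq_ge0.
set r := complex.Re (hip x y).
have h := hq_ge0 (x + (- r / hq y)%:C *: y).
rewrite hqD hqZr Re_hipZr -/r in h.
have e : hq y * (hq x + 2 * (- r / hq y * r) + (- r / hq y) ^+ 2 * hq y)
   = hq x * hq y - r ^+ 2.
  by field; rewrite ny0.
have : 0 <= hq x * hq y - r ^+ 2 by rewrite -e mulr_ge0 // ltW.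
by rewrite subr_ge0.
Qed.

Lemma Re_le (R : realType) (V : hilbert R) (x y : V) :
  `|complex.Re (hip x y)| <= hnorm x * hnorm y.
Proof.
have h := Re_CS x y; rewrite -!hnorm_sqr in h.
have a := hnorm_ge0 x; have b := hnorm_ge0 y.
rewrite -exprMn in h.
have ab : 0 <= hnorm x * hnorm y by rewrite mulr_ge0.
rewrite ler_norml; apply/andP; split; nra.
Qed.

Lemma Re_hipi (R : realType) (V : hilbert R) (x y : V) :
  complex.Re (hip x ('i%C *: y)) = complex.Im (hip x y).
Proof. by rewrite hipZr; case: (hip x y) => a b /=; lra. Qed.

Lemma hnormi (R : realType) (V : hilbert R) (y : V) : hnorm ('i%C *: y) = hnorm y.
Proof.
rewrite /hnorm /ip_norm hipZl hipZr; congr (Num.sqrt _).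
by case: (hip y y) => a b /=; lra.
Qed.

Lemma Im_le (R : realType) (V : hilbert R) (x y : V) :
  `|complex.Im (hip x y)| <= hnorm x * hnorm y.
Proof. by rewrite -Re_hipi -(hnormi y) Re_le. Qed.

Lemma hnormD (R : realType) (V : hilbert R) (x y : V) :
  hnorm (x + y) <= hnorm x + hnorm y.
Proof.
have a := hnorm_ge0 x; have b := hnorm_ge0 y.
have c := hnorm_ge0 (x + y).
have h : hnorm (x + y) ^+ 2 <= (hnorm x + hnorm y) ^+ 2.
  rewrite hnorm_sqr hqD -!hnorm_sqr.
  have := Re_le x y; rewrite ler_norml => /andP[_ r]; lra.
by rewrite -ler_sqr ?nnegrE ?addr_ge0.
Qed.

Lemma hnorm_gt0 (R : realType) (V : hilbert R) (x : V) : x <> 0 -> 0 < hnorm x.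
Proof.
move=> nx; rewrite lt_neqAle hnorm_ge0 andbT; apply/eqP => h.
apply: nx; apply: hq_eq0; by rewrite -hnorm_sqr -h expr2 mul0r.
Qed.

Lemma perp_dense (R : realType) (V : hilbert R) (D : set V) (e : V) :
  hdense D -> (forall d, D d -> hip e d = 0) -> e = 0.
Proof.
move=> dD pe; apply: contrapT => ne.
have n0 := hnorm_gt0 ne.
have [d [Dd hd]] := dD e (hnorm e / 2) (divr_gt0 n0 (ltr0Sn _ 1)).
have h1 : hq e = complex.Re (hip e (e - d)).
  by rewrite hipBr (pe d Dd) subr0.
have h2 := Re_le e (e - d); rewrite ler_norml in h2.
move: h2 => /andP[_ h2].
have h3 : hnorm e * hnorm (e - d) <= hnorm e * (hnorm e / 2).
  by rewrite ler_pM2l // ltW.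
rewrite -hnorm_sqr in h1. clear -h1 h2 h3 hd n0. nra.
Qed.

Lemma inv_nat_le (R : realType) (n K : nat) : (K <= n)%N -> (n.+1%:R)^-1 <= (K.+1%:R)^-1 :> R.
Proof. by move=> h; rewrite lef_pV2 ?posrE ?ltr0Sn // ler_nat. Qed.

Lemma inv_nat_pos (R : realType) (n : nat) : 0 < (n.+1%:R)^-1 :> R.
Proof. by rewrite invr_gt0 ltr0Sn. Qed.

Lemma exists_inv_nat (R : realType) (e : R) : 0 < e -> exists K : nat, (K.+1%:R)^-1 < e.
Proof.
move=> e0; exists (Num.Def.archi_bound e^-1).
have ei : 0 <= e^-1 by rewrite invr_ge0 ltW.
have h := archi_boundP ei.
set K := Num.Def.archi_bound _ in h *.
have h2 : e^-1 < K.+1%:R by rewrite (lt_trans h) // ltr_nat.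
by rewrite -(invrK e) ltf_pV2 ?posrE ?ltr0Sn ?invr_gt0.
Qed.

Lemma hqN (R : realType) (V : hilbert R) (x : V) : hq (- x) = hq x.
Proof. by rewrite /hq hipNl hipNr opprK. Qed.

Lemma hnormN (R : realType) (V : hilbert R) (x : V) : hnorm (- x) = hnorm x.
Proof. by rewrite /hnorm /ip_norm -/(hq _) -/(hq x) hqN. Qed.

Lemma hnormB (R : realType) (V : hilbert R) (x y : V) : hnorm (x - y) = hnorm (y - x).
Proof. by rewrite -hnormN opprB. Qed.

Lemma parallel (R : realType) (V : hilbert R) (a b : V) :
  hq (a - b) + hq (a + b) = 2 * hq a + 2 * hq b.
Proof. rewrite !hqD hqN hipNr raddfN /=; lra. Qed.

Definition closed_subspace (R : realType) (V : hilbert R) (N : set V) :=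
  N 0 /\ (forall a x y, N x -> N y -> N (a *: x + y)) /\
  (forall u l, (forall n, N (u n)) -> hcvg u l -> N l).

Lemma two_half (R : realType) (V : hilbert R) (v s : V) :
  (2%:R : R)%:C *: (v - ((2%:R : R)^-1)%:C *: s) = (v + v) - s.
Proof.
rewrite scalerBr scalerA.
have -> : (2%:R : R)%:C * ((2%:R : R)^-1)%:C = 1.
  apply/eqP; rewrite eq_complex /= mulr0 subr0 mul0r mulr0 addr0 mulfV ?eqxx //.
  by rewrite pnatr_eq0.
rewrite scale1r; congr (_ - _).
have -> : (2%:R : R)%:C = 1 + 1 by apply/eqP; rewrite eq_complex /= addr0 !eqxx.
by rewrite scalerDl scale1r.
Qed.

Lemma realCN (R : realType) (t : R) : (- t)%:C = - (t%:C).
Proof. by apply/eqP; rewrite eq_complex /= oppr0 !eqxx. Qed.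

Lemma projection (R : realType) (V : hilbert R) (N : set V) (v : V) :
  closed_subspace N -> exists p, N p /\ forall n, N n -> hip (v - p) n = 0.
Proof.
move=> [N0 [Nc Ncl]].
have NZ : forall a x, N x -> N (a *: x).
  by move=> a x Nx; rewrite -[a *: x]addr0; exact: Nc.
have ND : forall x y, N x -> N y -> N (x + y).
  by move=> x y Nx Ny; rewrite -[x]scale1r; exact: Nc.
pose E := [set r | exists n, N n /\ r = hq (v - n)].
have E0 : E !=set0 by exists (hq (v - 0)); exists 0.
have Elb : lbound E 0 by move=> r [n [_ ->]]; exact: hq_ge0.
have hinf : has_inf E by split => //; exists 0.
set d := inf E.
have d0 : 0 <= d by exact: lb_le_inf.
have dle : forall n, N n -> d <= hq (v - n).
  by move=> n Nn; apply: (ge_inf (proj2 hinf)); exists n.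
have ex : forall k : nat, exists n, N n /\ hq (v - n) < d + (k.+1%:R)^-1.
  move=> k; have [r [n [Nn ->]] lt] := inf_adherent (inv_nat_pos R k) hinf.
  by exists n.
have [u hu] := choice ex.
clearbody d.
have cb : forall m k, hq (u m - u k) <= 2 * (hq (v - u k) - d) + 2 * (hq (v - u m) - d).
  move=> m k.
  have P := parallel (v - u k) (v - u m).
  have E1 : v - u k - (v - u m) = u m - u k.
    by rewrite opprB addrC addrA subrK.
  rewrite E1 in P.
  have Nw : N (((2%:R:R)^-1)%:C *: (u k + u m)).
    by apply/NZ/ND; [exact: (hu k).1 | exact: (hu m).1].
  have h4 := dle _ Nw.
  have e : v - u k + (v - u m) = (2%:R : R)%:C *: (v - ((2%:R : R)^-1)%:C *: (u k + u m)).
    by rewrite two_half opprD addrACA.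
  rewrite e hqZr expr2 in P.
  clear -P h4; lra.
have cau : ip_cauchy (@hip _ V) u.
  move=> e e0.
  have e4 : 0 < e ^+ 2 / 4%:R by rewrite divr_gt0 ?exprn_gt0.
  have [K hK] := exists_inv_nat e4.
  exists K => m n hm hn.
  have c1 := cb m n.
  have c2 := (hu m).2; have c3 := (hu n).2.
  have c4 := inv_nat_le R hm; have c5 := inv_nat_le R hn.
  have hx : hq (u m - u n) < e ^+ 2.
    have hK' : (K.+1%:R)^-1 * 4%:R < e ^+ 2 :> R by rewrite -ltr_pdivlMr ?ltr0Sn.
    clear -c1 c2 c3 c4 c5 hK'; move: c1 c2 c3 c4 c5 hK'; generalize (m.+1%:R^-1 : R) (n.+1%:R^-1 : R) (K.+1%:R^-1 : R) => sm sn sK; lra.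
  change (hnorm (u m - u n) < e).
  have a := hnorm_ge0 (u m - u n); rewrite -hnorm_sqr in hx.
  clear -a hx e0; nra.
have [p hp] := hcomplete cau.
have Np : N p := Ncl u p (fun n => (hu n).1) hp.
exists p; split => //.
have qp : hq (v - p) <= d.
  apply/ler_addgt0Pr => η η0.
  pose D := 4%:R * d + 10%:R.
  have D0 : 0 < D by rewrite /D; lra.
  pose ε := η / (D + η).
  have Dη : 0 < D + η by lra.
  have ε0 : 0 < ε by rewrite divr_gt0.
  have ε1 : ε < 1 by rewrite ltr_pdivrMr // mul1r; lra.
  have εD : ε * D < η.
    rewrite /ε mulrAC ltr_pdivrMr //; nra.
  have η2 : 0 < η / 2%:R by rewrite divr_gt0.
  have [K1 hK1] := hp ε ε0.
  have [K2 hK2] := exists_inv_nat η2.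
  pose k := maxn K1 K2.
  have hb : hnorm (u k - p) < ε := hK1 k (leq_maxl _ _).
  have ha := (hu k).2.
  have hk := inv_nat_le R (leq_maxr K1 K2 : (K2 <= k)%N).
  have hk0 := inv_nat_pos R k.
  have hk1 : (k.+1%:R)^-1 <= (1 : R) by rewrite invf_le1 ?ltr0Sn // ler1n.
  have tri := hnormD (v - u k) (u k - p).
  have E1 : v - u k + (u k - p) = v - p by rewrite addrA subrK.
  rewrite E1 in tri.
  rewrite -hnorm_sqr -hnorm_sqr in ha *.
  have a0 := hnorm_ge0 (v - u k); have b0 := hnorm_ge0 (u k - p).
  have c0 := hnorm_ge0 (v - p).
  move: ha hb tri a0 b0 c0 hk hk0 hk1 hK2 ε1 ε0 εD d0.
  rewrite /D.
  set a := hnorm (v - u k); set b := hnorm (u k - p); set c := hnorm (v - p).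
  set s := (k.+1%:R)^-1; set s2 := (K2.+1%:R)^-1.
  clearbody ε.
  clear. move=> ha hb tri a0 b0 c0 hk hk0 hk1 hK2 ε1 ε0 εD d0.
  have al : a <= d + 2%:R by nra.
  have ab : 2%:R * a * b + b ^+ 2 <= (2%:R * d + 5%:R) * ε by nra.
  have cc : c ^+ 2 <= (a + b) ^+ 2 by nra.
  nra.
have reo : forall n, N n -> complex.Re (hip (v - p) n) = 0.
  move=> n Nn.
  set r := complex.Re (hip (v - p) n).
  have key : forall t : R, 0 <= 2%:R * (- t * r) + t ^+ 2 * hq n.
    move=> t.
    have h := dle _ (Nc t%:C _ _ Nn Np).
    have E1 : v - (t%:C *: n + p) = (v - p) + (- t)%:C *: n.
      by rewrite realCN scaleNr opprD addrA addrAC.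
    rewrite E1 in h.
    rewrite hqD hqZr Re_hipZr -/r sqrrN in h.
    clear -h qp; lra.
  have qn := hq_ge0 n.
  pose s := (hq n + 1)^-1.
  have s0 : 0 < s by rewrite invr_gt0; lra.
  have sq : s * hq n = 1 - s.
    rewrite /s; field; lra.
  have k := key (r * s).
  have hr : r ^+ 2 * (s * (1 + s)) <= 0.
    clear -k sq s0 qn; nra.
  have r2 : r ^+ 2 <= 0.
    have ps : 0 < s * (1 + s) by rewrite mulr_gt0 //; lra.
    clear -hr ps; nra.
  by apply/eqP; rewrite -sqrf_eq0 eq_le r2 sqr_ge0.
move=> n Nn.
have h1 := reo n Nn; have h2 := reo _ (NZ 'i%C n Nn); rewrite Re_hipi in h2.
by move: h1 h2; case: (hip (v - p) n) => a b /= -> ->.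
Qed.

Lemma zero_of_small (R : realType) (z c : R) :
  (forall e, 0 < e -> `|z| <= c * e) -> z = 0.
Proof.
move=> h; apply/normr0_eq0/eqP; rewrite eq_le normr_ge0 andbT.
apply/ler_addgt0Pr => η η0; rewrite add0r.
have c1 : 0 < `|c| + 1 by rewrite ltr_wpDl.
have e0 : 0 < η / (`|c| + 1) by rewrite divr_gt0.
have h1 := h _ e0.
have h2 : c * (η / (`|c| + 1)) <= `|c| * (η / (`|c| + 1)).
  by apply: ler_wpM2r; [exact: ltW | exact: ler_norm].
have h3 : `|c| * (η / (`|c| + 1)) <= η.
  rewrite mulrA ler_pdivrMr //; have w0 := normr_ge0 c.
  move: w0; generalize `|c| => w w0; nra.
by apply: (le_trans h1); apply: (le_trans h2).
Qed.

Lemma riesz (R : realType) (V : hilbert R) (φ : V -> R[i]) (c : R) :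
  (forall a x y, φ (a *: x + y) = a * φ x + φ y) ->
  (forall x, `|complex.Re (φ x)| <= c * hnorm x /\ `|complex.Im (φ x)| <= c * hnorm x) ->
  exists g, forall x, φ x = hip x g.
Proof.
move=> lin bd0.
have bd : forall x, `|complex.Re (φ x)| <= `|c| * hnorm x /\
                    `|complex.Im (φ x)| <= `|c| * hnorm x.
  move=> x; have [h1 h2] := bd0 x.
  have h : c * hnorm x <= `|c| * hnorm x.
    by apply: ler_wpM2r; [exact: hnorm_ge0 | exact: ler_norm].
  by split; apply: le_trans h.
have φ0 : φ 0 = 0.
  have h := lin 1 0 0; rewrite scale1r addr0 mul1r in h.
  by apply/esym/(@addrI _ (φ 0)); rewrite addr0 {1}h.
have φB : forall x y, φ (x - y) = φ x - φ y.
  move=> x y; have := lin (-1) y x.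
  by rewrite scaleN1r mulN1r addrC => ->; rewrite addrC.
have Ncl : forall u l, (forall n, φ (u n) = 0) -> hcvg u l -> φ l = 0.
  move=> u l hu hc.
  have key : forall e, 0 < e -> exists n, φ l = φ (l - u n) /\ hnorm (l - u n) < e.
    move=> e e0; have [K hK] := hc e e0; exists K.
    by rewrite φB hu subr0 hnormB; split => //; exact: hK.
  have hre : complex.Re (φ l) = 0.
    apply: (@zero_of_small _ _ `|c|) => e e0.
    have [n [-> hn]] := key e e0.
    apply: (le_trans (bd _).1); rewrite ler_wpM2l ?normr_ge0 // ltW //.
  have him : complex.Im (φ l) = 0.
    apply: (@zero_of_small _ _ `|c|) => e e0.
    have [n [-> hn]] := key e e0.
    apply: (le_trans (bd _).2); rewrite ler_wpM2l ?normr_ge0 // ltW //.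
  by move: hre him; case: (φ l) => a b /= -> ->.
have cs : closed_subspace [set x | φ x = 0].
  split; first exact: φ0.
  split; last exact: Ncl.
  by move=> a x y /= hx hy; rewrite lin hx hy mulr0 addr0.
case: (pselect (forall x, φ x = 0)) => [all0 | /existsNP [v0 nv0]].
  by exists 0 => x; rewrite hip0r all0.
have [p [Np hp]] := projection v0 cs.
set z := v0 - p in hp.
have φz : φ z = φ v0 by rewrite /z φB Np subr0.
have nφz : φ z != 0 by rewrite φz; apply/eqP.
have hzz : hip z z != 0.
  apply/eqP => /hip_def z0; move: nφz; by rewrite z0 φ0 eqxx.
exists (conjc (φ z / hip z z) *: z) => x.
pose n := (- (φ x / φ z)) *: z + x.
have Nn : φ n = 0.
  by rewrite /n lin; field.
have hnz : hip n z = 0 by rewrite hip_conj (hp n Nn) conjc0'.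
rewrite /n hip_linl in hnz.
rewrite hipZr conjcK.
have e : hip x z = φ x / φ z * hip z z.
  by move/eqP: hnz; rewrite addrC addr_eq0 mulNr opprK => /eqP.
rewrite e; field; apply/andP; split => //.
Qed.


Lemma lop_add (R : realType) (V W : hilbert R) (A : op V W) x y :
  linear_op A -> dom A x -> dom A y ->
  dom A (x + y) /\ app A (x + y) = app A x + app A y.
Proof. by move=> [_ l] dx dy; have := l 1 x y dx dy; rewrite !scale1r. Qed.

Lemma lop_sub (R : realType) (V W : hilbert R) (A : op V W) x y :
  linear_op A -> dom A x -> dom A y ->
  dom A (x - y) /\ app A (x - y) = app A x - app A y.
Proof.
by move=> [_ l] dx dy; have := l (-1) y x dy dx; rewrite !scaleN1r ![- _ + _]addrC.
Qed.

Lemma lon_add (R : realType) (V W : hilbert R) (D : set V) (f : V -> W) x y :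
  linear_on D f -> D x -> D y -> f (x + y) = f x + f y.
Proof. by move=> l dx dy; have := l 1 x y dx dy; rewrite !scale1r. Qed.

Lemma lon_sub (R : realType) (V W : hilbert R) (D : set V) (f : V -> W) x y :
  linear_on D f -> D x -> D y -> f (x - y) = f x - f y.
Proof. by move=> l dx dy; have := l (-1) y x dy dx; rewrite !scaleN1r ![- _ + _]addrC. Qed.

Lemma hipC0 (R : realType) (V : hilbert R) (x y : V) : hip x y = 0 -> hip y x = 0.
Proof. by move=> h; rewrite hip_conj h conjc0'. Qed.

Lemma conjcK' (R : realType) (a : R[i]) : conjc (conjc a) = a.
Proof. by case: a => a b /=; rewrite opprK. Qed.

Lemma subrACA' (V : zmodType) (a b c d : V) : (a - b) - (c - d) = (a - c) - (b - d).
Proof. by rewrite !opprD !opprK addrACA. Qed.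

Lemma part_i (R : realType) (H G : hilbert R) (S St T Tt : op H H)
  (Gam0 Gam1 Gamt0 Gamt1 : H -> G) :
  triple_GDM S St T Tt Gam0 Gam1 Gamt0 Gamt1 ->
  (forall (B : op G G) (l : R[i]) (f : H),
     linear_op B ->
     resolvent (A0 T Gam0) l ->
     ~ is_eigenvalue (AB T Gam0 Gam1 B) l ->
     dom (op_comp B (op_adj (gammaf Tt Gamt0 (conjc l)))) f ->
     dom (op_inv (op_minus (op_id G) (op_comp B (weylM T Gam0 Gam1 l))))
       (app (op_comp B (op_adj (gammaf Tt Gamt0 (conjc l)))) f) ->
     dom (op_inv (op_shift (AB T Gam0 Gam1 B) l)) f /\
     app (op_inv (op_shift (AB T Gam0 Gam1 B) l)) f =
       app (op_inv (op_shift (A0 T Gam0) l)) f +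
       app (gammaf T Gam0 l)
         (app (op_inv (op_minus (op_id G) (op_comp B (weylM T Gam0 Gam1 l))))
           (app (op_comp B (op_adj (gammaf Tt Gamt0 (conjc l)))) f))).
Proof.
move=> [[linS [linSt [dS [dSt [clS [clSt adjSSt]]]]]] [linT [linTt [[clT [leT apT]] [[clTt [leTt apTt]] [lG0 [lG1 [lGt0 [lGt1 [Gr [D0 [Dt0 [M1 M2]]]]]]]]]]]]].
move=> B l f linB [surj [inj [c bnd]]] neig hf hk.
have adjTt : forall g, dom Tt g -> adj_rel St g (app Tt g).
  move=> g dg; have [dA eA] := leTt g dg; rewrite -eA; exact: xgetPex dA.
have dSt_A0 : forall u, dom St u -> dom (A0 T Gam0) u.
  move=> u du; apply: (proj1 (proj1 M2 u)); exists (app St u) => g [dg _] /=.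
  have := adjTt g dg u du => e.
  by rewrite hip_conj -e -hip_conj.
have A0dense : hdense (dom (A0 T Gam0)).
  move=> x e e0; have [y [dy hy]] := dSt x e e0; exists y; split => //.
  exact: dSt_A0.
have adjA0 : forall g, dom (A0 Tt Gamt0) g -> adj_rel (A0 T Gam0) g (app Tt g).
  move=> g dg; have dA := proj2 (proj1 M1 g) dg.
  have e := proj2 M1 g dA; rewrite /= in e; rewrite -e; exact: xgetPex dA.
pose R0 := app (op_inv (op_shift (A0 T Gam0) l)).
have RP : forall v, dom (A0 T Gam0) (R0 v) /\ app T (R0 v) - l *: R0 v = v.
  by move=> v; exact: (xgetPex 0 (surj v)).
have linA0 : forall a x y, dom (A0 T Gam0) x -> dom (A0 T Gam0) y ->
    dom (A0 T Gam0) (a *: x + y) /\ app T (a *: x + y) = a *: app T x + app T y.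
  move=> a x y [dx gx] [dy gy]; have [d1 e1] := linT.2 a x y dx dy.
  split => //; split => //=; by rewrite (lG0 a x y dx dy) gx gy scaler0 addr0.
have subA0 : forall x y, dom (A0 T Gam0) x -> dom (A0 T Gam0) y ->
    dom (A0 T Gam0) (x - y) /\ app T (x - y) = app T x - app T y.
  move=> x y dx dy; have [d1 e1] := linA0 (-1) y x dy dx.
  have E : -1 *: y + x = x - y by rewrite scaleN1r addrC.
  rewrite E in d1 e1; split => //; by rewrite e1 scaleN1r addrC.
have ushift : forall x y, dom (A0 T Gam0) x -> dom (A0 T Gam0) y ->
    app T x - l *: x = app T y - l *: y -> x = y.
  move=> x y dx dy e; apply/eqP; rewrite -subr_eq0; apply/eqP; apply: inj.
    exact: (subA0 x y dx dy).1.
  rewrite /= (subA0 x y dx dy).2 scalerBr subrACA' e subrr //.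
have Rlin : forall a v w, R0 (a *: v + w) = a *: R0 v + R0 w.
  move=> a v w; apply: ushift; first exact: (RP _).1.
    exact: (linA0 a _ _ (RP v).1 (RP w).1).1.
  rewrite (RP _).2 (linA0 a _ _ (RP v).1 (RP w).1).2.
  rewrite scalerDr !scalerA mulrC -scalerA opprD addrACA -scalerBr.
  by rewrite (RP v).2 (RP w).2.
have Rbound : forall v, hnorm (R0 v) <= c * hnorm v.
  by move=> v; have := bnd (R0 v) (RP v).1; rewrite /= (RP v).2.
have surjt : forall y, exists w, dom (A0 Tt Gamt0) w /\ app Tt w - conjc l *: w = y.
  move=> y.
  have [w hw] := @riesz _ _ (fun v => hip (R0 v) y) (c * hnorm y)
    (fun a x z => ltac:(by rewrite /= Rlin hip_linl)) (fun x => ltac:(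
      have b1 := Re_le (R0 x) y; have b2 := Im_le (R0 x) y;
      have r := ler_wpM2r (hnorm_ge0 y) (Rbound x);
      rewrite mulrAC in r; split; [exact: le_trans b1 r | exact: le_trans b2 r])).
  have adjw : adj_rel (A0 T Gam0) w (y + conjc l *: w).
    move=> u du /=.
    have Ru : R0 (app T u - l *: u) = u := ushift _ _ (RP _).1 du (RP _).2.
    have := hw (app T u - l *: u); rewrite /= Ru hipBl hipZl => e.
    by rewrite hipDr hipZr conjcK' e subrK.
  have dw : dom (A0 Tt Gamt0) w := proj1 (proj1 M1 w) (ex_intro _ _ adjw).
  have aw := adjA0 w dw.
  have e0 : app Tt w - (y + conjc l *: w) = 0.
    apply: (perp_dense A0dense) => u du; apply: hipC0.
    by rewrite hipBr -(aw u du) -(adjw u du) subrr.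
  exists w; split => //.
  by move/eqP: e0; rewrite subr_eq0 => /eqP ->; rewrite addrK.
have kerinj : forall g, dom Tt g -> app Tt g = conjc l *: g -> Gamt0 g = 0 -> g = 0.
  move=> g dg eg g0; have dA : dom (A0 Tt Gamt0) g by split.
  have a := adjA0 g dA; rewrite eg in a.
  apply: hip_def; have [x [dx ex]] := surj g.
  by rewrite -{1}ex /= hipBl (a x dx) hipZr conjcK' hipZl subrr.
have unique_ker : forall g1 g2, dom Tt g1 -> app Tt g1 = conjc l *: g1 ->
    dom Tt g2 -> app Tt g2 = conjc l *: g2 -> Gamt0 g1 = Gamt0 g2 -> g1 = g2.
  move=> g1 g2 d1 e1 d2 e2 e; apply/eqP; rewrite -subr_eq0; apply/eqP.
  have [d3 e3] := lop_sub linTt d1 d2.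
  apply: kerinj => //; first by rewrite e3 e1 e2 scalerBr.
  by rewrite (lon_sub lGt0 d1 d2) e subrr.
have gt_app : forall g, dom Tt g -> app Tt g = conjc l *: g ->
    app (gammaf Tt Gamt0 (conjc l)) (Gamt0 g) = g.
  move=> g dg eg; apply: xget_unique; first by split.
  by move=> y [[dy ey] gy]; apply: unique_ker.
have decomp : forall g, dom Tt g ->
    exists g1, (dom Tt g1 /\ app Tt g1 = conjc l *: g1) /\ Gamt0 g1 = Gamt0 g.
  move=> g dg; have [w [[dw gw] ew]] := surjt (app Tt g - conjc l *: g).
  exists (g - w); have [d1 e1] := lop_sub linTt dg dw.
  split; [split => // |].
    by apply/eqP; rewrite e1 scalerBr -subr_eq0 subrACA' ew subrr.
  by rewrite (lon_sub lGt0 dg dw) gw subr0.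
set gt := gammaf Tt Gamt0 (conjc l) in hf hk *.
set h := app (op_adj gt) f.
case: hf => dh dBh; rewrite -/h in dBh.
have hrel : adj_rel gt f h := xgetPex 0 dh.
set M' := op_minus (op_id G) (op_comp B (weylM T Gam0 Gam1 l)) in hk *.
change (dom (op_inv M') (app B h)) in hk.
set k := app (op_inv M') (app B h).
have kP : dom M' k /\ app M' k = app B h := xgetPex 0 hk.
case: kP => [[_ [[dgk dTu] dBu]] ek].
set u := app (gammaf T Gam0 l) k in dTu dBu ek *.
have uP : (dom T u /\ app T u = l *: u) /\ Gam0 u = k := xgetPex 0 dgk.
case: uP => [[du eTu] G0u].
rewrite /= -/u in ek dBu.
set x0 := R0 f.
have [[dx0 G0x0] Tx0] := RP f; rewrite -/x0 in dx0 G0x0 Tx0.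
have h1 : Gam1 x0 = h.
  apply/eqP; rewrite -subr_eq0; apply/eqP.
  apply: (perp_dense Dt0) => _ [g dg <-].
  have [g1 [[d1 e1] ge]] := decomp g dg; rewrite -ge.
  have Gr1 := Gr x0 g1 dx0 d1.
  rewrite G0x0 hip0l subr0 e1 hipZr conjcK' in Gr1.
  have ef : hip f g1 = hip (app T x0) g1 - l * hip x0 g1.
    by rewrite -{1}Tx0 hipBl hipZl.
  have hr := hrel (Gamt0 g1) (ex_intro _ g1 (conj (conj d1 e1) erefl)).
  rewrite gt_app // in hr.
  by rewrite hipBl -Gr1 -ef (hip_conj g1 f) hr -hip_conj subrr.
set x := x0 + u.
have [dTx eTx] := lop_add linT dx0 du; rewrite -/x in dTx eTx.
have Txx : app T x - l *: x = f.
  by rewrite eTx scalerDr opprD addrACA Tx0 eTu subrr addr0.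
have G1x : Gam1 x = h + Gam1 u by rewrite (lon_add lG1 dx0 du) h1.
have G0x : Gam0 x = k by rewrite (lon_add lG0 dx0 du) G0x0 G0u add0r.
have [dBx eBx] := lop_add linB dBh dBu.
have eBk : app B (h + Gam1 u) = k by rewrite eBx -ek subrK.
have domAB : dom (AB T Gam0 Gam1 B) x.
  by split => //; rewrite G1x G0x; split.
have uniq : forall y, dom (AB T Gam0 Gam1 B) y -> app T y - l *: y = f -> y = x.
  move=> y [dy [dBy eBy]] ey; apply/eqP; rewrite -subr_eq0; apply/eqP.
  apply: contrapT => nz; apply: neig; exists (y - x).
  have [dyx eyx] := lop_sub linT dy dTx.
  have G1yx := lon_sub lG1 dy dTx; have G0yx := lon_sub lG0 dy dTx.
  rewrite -G1x in dBx.
  have [dB2 eB2] := lop_sub linB dBy dBx.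
  split; [split => //; rewrite G1yx; split => //; by rewrite eB2 eBy G0yx G1x eBk G0x |].
  split => //=; apply/eqP; rewrite eyx scalerBr -subr_eq0 subrACA' ey Txx subrr //.
split; first by exists x.
rewrite /= (@xget_unique _ 0 _ x) //.
by move=> y [dy ey]; exact: uniq.
Qed.

Lemma conjcB' (R : realType) (a b : R[i]) : conjc (a - b) = conjc a - conjc b.
Proof. by rewrite conjcD conjcN. Qed.

Lemma triple_sym (R : realType) (H G : hilbert R) (S St T Tt : op H H)
  (Gam0 Gam1 Gamt0 Gamt1 : H -> G) :
  triple_GDM S St T Tt Gam0 Gam1 Gamt0 Gamt1 ->
  triple_GDM St S Tt T Gamt0 Gamt1 Gam0 Gam1.
Proof.
move=> [[linS [linSt [dS [dSt [clS [clSt adjSSt]]]]]] [linT [linTt [cT [cTt [lG0 [lG1 [lGt0 [lGt1 [Gr [D0 [Dt0 [M1 M2]]]]]]]]]]]]].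
refine (conj (conj linSt (conj linS (conj dSt (conj dS (conj clSt (conj clS _))))))
  (conj linTt (conj linT (conj cTt (conj cT (conj lGt0 (conj lGt1 (conj lG0
  (conj lG1 (conj _ (conj Dt0 (conj D0 (conj M2 M1))))))))))))).
  move=> f g df dg; rewrite [LHS]hip_conj -adjSSt // -hip_conj //.
move=> g f dg df; apply: oppr_inj.
have e := congr1 conjc (Gr f g df dg).
rewrite !conjcB' -!hip_conj in e.
by rewrite !opprB e.
Qed.

End Helpers.

Theorem corollary4p5 (R : realType) (H G : hilbert R) (S St T Tt : op H H)
  (Gam0 Gam1 Gamt0 Gamt1 : H -> G) :
  separable H ->
  triple_GDM S St T Tt Gam0 Gam1 Gamt0 Gamt1 ->
  (exists l0, resolvent (A0 T Gam0) l0) ->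
  (* (i) *)
  (forall (B : op G G) (l : R[i]) (f : H),
     linear_op B ->
     resolvent (A0 T Gam0) l ->
     ~ is_eigenvalue (AB T Gam0 Gam1 B) l ->
     dom (op_comp B (op_adj (gammaf Tt Gamt0 (conjc l)))) f ->
     dom (op_inv (op_minus (op_id G) (op_comp B (weylM T Gam0 Gam1 l))))
       (app (op_comp B (op_adj (gammaf Tt Gamt0 (conjc l)))) f) ->
     dom (op_inv (op_shift (AB T Gam0 Gam1 B) l)) f /\
     app (op_inv (op_shift (AB T Gam0 Gam1 B) l)) f =
       app (op_inv (op_shift (A0 T Gam0) l)) f +
       app (gammaf T Gam0 l)
         (app (op_inv (op_minus (op_id G) (op_comp B (weylM T Gam0 Gam1 l))))
           (app (op_comp B (op_adj (gammaf Tt Gamt0 (conjc l)))) f))) /\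
  (* (ii) *)
  (forall (Bt : op G G) (m : R[i]) (g : H),
     linear_op Bt ->
     resolvent (A0 Tt Gamt0) m ->
     ~ is_eigenvalue (AB Tt Gamt0 Gamt1 Bt) m ->
     dom (op_comp Bt (op_adj (gammaf T Gam0 (conjc m)))) g ->
     dom (op_inv (op_minus (op_id G) (op_comp Bt (weylM Tt Gamt0 Gamt1 m))))
       (app (op_comp Bt (op_adj (gammaf T Gam0 (conjc m)))) g) ->
     dom (op_inv (op_shift (AB Tt Gamt0 Gamt1 Bt) m)) g /\
     app (op_inv (op_shift (AB Tt Gamt0 Gamt1 Bt) m)) g =
       app (op_inv (op_shift (A0 Tt Gamt0) m)) g +
       app (gammaf Tt Gamt0 m)
         (app (op_inv (op_minus (op_id G) (op_comp Bt (weylM Tt Gamt0 Gamt1 m))))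
           (app (op_comp Bt (op_adj (gammaf T Gam0 (conjc m)))) g))).
Proof.
move=> _ tr _; split; [exact: part_i tr | exact: part_i (triple_sym tr)].
Qed.
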